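(* Let $n,d\ge2$, $g(s)=((n+1)s-1)^{d-1}-(-1)^{d-1}$, and for $\mathbf s=(s_1,\ldots,s_{n-1})\in\mathbb R^{n-1}$ let $$\mathbf h(\mathbf s)=\Big(s_k\Big(g\big(1-\textstyle\sum_{j=1}^{n-1}s_j\big)+\sum_{j=1}^{n-1}g(s_j)\Big)-g(s_k)\Big)_{1\le k\le n-1}.$$ Write $s_n:=1-\sum_{k=1}^{n-1}s_k$ and $\Delta_{n-1}=\{\mathbf s\in\mathbb R^{n-1}:s_k\ge0,\ \sum_{k=1}^{n-1}s_k\le1\}$. (i) $\mathbf h(\mathbf s)=\mathbf 0$ for every $\mathbf s\in\Delta_{n-1}$ for which there is a nonempty $K\subseteq\{1,\ldots,n\}$ with $s_k=\frac1{|K|}$ for $k\in K$ and $s_k=0$ for $k\in\{1,\ldots,n\}\setminus K$. (ii) If $d=2$, $\mathbf h$ vanishes identically. (iii) If $d$ is odd, $\mathbf h$ has no zeros in $\Delta_{n-1}$ other than those in (i). (iv) If $d\ge4$ is even, $\mathbf h$ vanishes at $\mathbf s\in\Delta_{n-1}$ if and only if there exist disjoint $K_1,K_2\subseteq\{1,\ldots,n\}$, not both empty, such that one of the following holds: (a) $K_1=\emptyset$, $\frac1{|K_2|}>s^*$, $s_k=\frac1{|K_2|}$ for $k\in K_2$ and $s_k=0$ otherwise; (b) $K_2=\emptyset$, $\frac1{|K_1|}\le s^*$, $s_k=\frac1{|K_1|}$ for $k\in K_1$ and $s_k=0$ otherwise; (c) $K_1,K_2\ne\emptyset$, $s_k=a$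 for $k\in K_1$, $s_k=b$ for $k\in K_2$, $s_k=0$ for $k\notin K_1\cup K_2$, where $a\in(0,s^* )$ is a zero of the polynomial $r(s)=\frac{g(s)}{s}-\frac{|K_2|\,g\big(\frac{1-|K_1|s}{|K_2|}\big)}{1-|K_1|s}$ and $b=\frac{1-|K_1|a}{|K_2|}\in(s^*,1]$.
   Context: For $d\ge4$ even, $s^*$ denotes the unique point $s^*\in[\frac1n,\frac2{n+1})$ such that the polynomial $p(s)=g(s)/s$ is strictly decreasing on $[0,s^*]$ and strictly increasing on $[s^*,\infty)$ (its existence is part of a preceding lemma). *)

(* Defs.v *)
From mathcomp Require Import all_boot all_order all_algebra.
Set Implicit Arguments. Unset Strict Implicit. Unset Printing Implicit Defensive.
Import Order.TTheory GRing.Theory Num.Theory.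
Local Open Scope ring_scope.

Section Defs.
Variable R : realFieldType.

Definition g (n d : nat) (x : R) : R :=
  ((n.+1)%:R * x - 1) ^+ d.-1 - (-1) ^+ d.-1.

Definition gpoly (n d : nat) : {poly R} :=
  ((n.+1)%:R *: 'X - 1) ^+ d.-1 - ((-1) ^+ d.-1)%:P.

(* the polynomial p(s) = g(s)/s  (g(0) = 0, so 'X divides gpoly) *)
Definition ppoly (n d : nat) : {poly R} := gpoly n d %/ 'X.

Definition h (n d : nat) (s : 'rV[R]_(n.-1)) : 'rV[R]_(n.-1) :=
  \row_k (s 0 k * (g n d (1 - \sum_j s 0 j) + \sum_j g n d (s 0 j))
          - g n d (s 0 k)).

Definition inDelta (n : nat) (s : 'rV[R]_(n.-1)) : Prop :=
  (forall k, 0 <= s 0 k) /\ \sum_k s 0 k <= 1.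

(* extension (s_1,...,s_{n-1}) |-> (s_1,...,s_n), s_n = 1 - sum s_k;
   index i : 'I_n corresponds to i+1 in {1,...,n} *)
Definition sext (n : nat) (s : 'rV[R]_(n.-1)) (i : 'I_n) : R :=
  odflt (1 - \sum_j s 0 j)
        (omap (fun j : 'I_(n.-1) => s 0 j) (insub (val i))).

Definition is_sstar (n d : nat) (t : R) : Prop :=
  [/\ n%:R^-1 <= t, t < 2 / (n.+1)%:R,
      (forall x y, 0 <= x -> x < y -> y <= t ->
          (ppoly n d).[y] < (ppoly n d).[x]) &
      (forall x y, t <= x -> x < y ->
          (ppoly n d).[x] < (ppoly n d).[y])].

End Defs.
Arguments h {R} n d s.

(* Main.v *)
Require Import Defs.
From mathcomp Require Import all_boot all_order all_algebra.
From mathcomp Require Import ring lra.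
Import Order.TTheory GRing.Theory Num.Theory.
Set Implicit Arguments. Unset Strict Implicit. Unset Printing Implicit Defensive.
Local Open Scope ring_scope.

Section S1.
Variable R : realFieldType.

Lemma sext_lt m (s : 'rV[R]_m) (i : 'I_m.+1) (j : 'I_m) :
  val i = val j -> sext (n:=m.+1) s i = s 0 j.
Proof.
move=> hij; rewrite /sext /=; case: insubP => [k _ hk|].
  by rewrite /=; congr (s 0 _); apply: val_inj; rewrite /= hk hij.
by rewrite hij ltn_ord.
Qed.

Lemma sext_max m (s : 'rV[R]_m) (i : 'I_m.+1) :
  val i = m -> sext (n:=m.+1) s i = 1 - \sum_j s 0 j.
Proof. by move=> hi; rewrite /sext insubF //= hi ltnn. Qed.

Lemma sum_sext_g m (s : 'rV[R]_m) (f : R -> R) :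
  \sum_(i < m.+1) f (sext (n:=m.+1) s i) = f (1 - \sum_j s 0 j) + \sum_j f (s 0 j).
Proof.
rewrite big_ord_recr /= addrC (@sext_max m s ord_max) //; congr (_ + _).
by apply: eq_bigr => j _; rewrite (@sext_lt m s _ j).
Qed.

Lemma sum_sext m (s : 'rV[R]_m) : \sum_(i < m.+1) sext (n:=m.+1) s i = 1.
Proof.
rewrite (sum_sext_g s id) /=. by rewrite subrK.
Qed.

Lemma h_zero_iff m d (s : 'rV[R]_m) :
  h m.+1 d s = 0 <-> exists l, forall i, g m.+1 d (sext (n:=m.+1) s i) = l * sext (n:=m.+1) s i.
Proof.
split.
  move=> H; set l := g m.+1 d (1 - \sum_j s 0 j) + \sum_j g m.+1 d (s 0 j).
  have Hk : forall k : 'I_m, g m.+1 d (s 0 k) = l * s 0 k.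
    move=> k; have := congr1 (fun M : 'rV[R]_m => M 0 k) H; rewrite !mxE /= => /eqP.
    by rewrite subr_eq0 mulrC => /eqP ->.
  exists l => i; case: (ltnP i m) => hi.
    by rewrite (@sext_lt m s _ (Ordinal hi)) // Hk.
  have him : val i = m by apply/eqP; rewrite eqn_leq hi -ltnS ltn_ord.
  rewrite (@sext_max m s _ him) mulrBr mulr1 mulr_sumr.
  have -> : \sum_j l * s 0 j = \sum_j g m.+1 d (s 0 j).
    by apply: eq_bigr => j _; rewrite Hk.
  by rewrite /l addrK.
move=> [l Hl].
have HG : g m.+1 d (1 - \sum_j s 0 j) + \sum_j g m.+1 d (s 0 j) = l.
  rewrite -(sum_sext_g s (g m.+1 d)).
  rewrite (eq_bigr (fun i => l * sext (n:=m.+1) s i)); last by move=> i _; rewrite Hl.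
  by rewrite -mulr_sumr sum_sext mulr1.
apply/rowP => k; rewrite !mxE HG.
have := Hl (widen_ord (leqnSn m) k); rewrite (@sext_lt m s _ k) // => ->.
by rewrite mulrC subrr.
Qed.

End S1.

Section S2.
Variable R : realFieldType.

Lemma g0 n d : g (R:=R) n d 0 = 0.
Proof. by rewrite /g mulr0 sub0r subrr. Qed.

Lemma g2 n (x : R) : g n 2 x = n.+1%:R * x.
Proof. by rewrite /g expr1 opprK subrK. Qed.

Lemma gpoly_horner n d (x : R) : (gpoly R n d).[x] = g n d x.
Proof. by rewrite /gpoly /g !hornerE. Qed.

Lemma ppoly_horner n d (x : R) : (ppoly R n d).[x] * x = g n d x.
Proof.
have hd : 'X %| gpoly R n d.
  have -> : 'X = 'X - (0:R)%:P by rewrite subr0.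
  by rewrite dvdp_XsubCl /root gpoly_horner g0.
by rewrite -gpoly_horner -(divpK hd) hornerMX.
Qed.

Lemma tangent_nn k (x y : R) : 0 <= x -> 0 <= y -> x != y ->
  y ^+ k.+2 + k.+2%:R * y ^+ k.+1 * (x - y) < x ^+ k.+2.
Proof.
move=> hx hy hxy; elim: k => [|k IH].
  have : 0 < (x - y) ^+ 2 by rewrite exprn_even_gt0 // subr_eq0 hxy.
  move=> h; rewrite !exprS !expr0 in h *; lra.
have hid : y ^+ k.+3 + k.+3%:R * y ^+ k.+2 * (x - y) =
   x * (y ^+ k.+2 + k.+2%:R * y ^+ k.+1 * (x - y))
   - k.+2%:R * y ^+ k.+1 * (x - y) ^+ 2.
  rewrite [y ^+ k.+3]exprS [y ^+ k.+2]exprS.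
  rewrite -[k.+3]addn1 -[k.+2]addn1 !natrD; ring.
rewrite hid.
have hp : 0 <= k.+2%:R * y ^+ k.+1 * (x - y) ^+ 2.
  by apply: mulr_ge0; [apply: mulr_ge0; [exact: ler0n | exact: exprn_ge0] | exact: sqr_ge0].
have [x0|xp] := eqVneq x 0.
  subst x; have yp : 0 < y by rewrite lt_def eq_sym hxy hy.
  have : 0 < k.+2%:R * y ^+ k.+1 * (0 - y) ^+ 2.
    rewrite sub0r sqrrN; apply: mulr_gt0; [apply: mulr_gt0; [exact: ltr0Sn | exact: exprn_gt0] | exact: exprn_gt0].
  rewrite mul0r expr0n /=; lra.
have xg : 0 < x by rewrite lt_def xp hx.
have := ltr_pM2l xg; move=> h; rewrite [x ^+ k.+3]exprS.
have := IH; rewrite -h => IH'. lra.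
Qed.


Lemma tangent_pos k (x y : R) : 0 <= y -> x != y ->
  y ^+ (k.*2).+2 + (k.*2).+2%:R * y ^+ (k.*2).+1 * (x - y) < x ^+ (k.*2).+2.
Proof.
move=> hy hxy; have [hx|hx] := leP 0 x; first exact: tangent_nn.
have h1 : 0 < x ^+ (k.*2).+2 by rewrite exprn_even_gt0 /= ?odd_double // lt_eqF.
have h2 : 0 <= (k.*2).+2%:R * y ^+ (k.*2).+1.
  by apply: mulr_ge0; [exact: ler0n | exact: exprn_ge0].
have h3 : (k.*2).+2%:R * y ^+ (k.*2).+1 * (x - y) <=
          (k.*2).+2%:R * y ^+ (k.*2).+1 * (- y).
  by apply: ler_wpM2l => //; lra.
have h4 : y ^+ (k.*2).+2 + (k.*2).+2%:R * y ^+ (k.*2).+1 * (- y) <= 0.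
  rewrite [y ^+ (k.*2).+2]exprSr.
  set c := (k.*2).+2%:R; set Y := y ^+ (k.*2).+1.
  have : 0 <= (c - 1) * (Y * y).
    apply: mulr_ge0; last by rewrite mulr_ge0 // exprn_ge0.
    by rewrite subr_ge0 /c ler1n.
  lra.
lra.
Qed.

Lemma tangent_even k (x y : R) : x != y ->
  y ^+ (k.*2).+2 + (k.*2).+2%:R * y ^+ (k.*2).+1 * (x - y) < x ^+ (k.*2).+2.
Proof.
move=> hxy; have [hy|hy] := leP 0 y; first exact: tangent_pos.
have := @tangent_pos k (- x) (- y); rewrite oppr_ge0 ltW // eqr_opp => /(_ isT hxy).
have ev : (-1) ^+ (k.*2).+2 = 1 :> R by rewrite -signr_odd /= odd_double.
have od : (-1) ^+ (k.*2).+1 = -1 :> R by rewrite -signr_odd /= odd_double.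
rewrite (exprNn x) (exprNn y) (exprNn y (k.*2).+1) ev od !mul1r.
set Y := y ^+ (k.*2).+1; set c := (k.*2).+2%:R; move=> H.
have -> : c * Y * (x - y) = c * (-1 * Y) * (- x - - y) by ring.
exact: H.
Qed.

Lemma secant_even k (u v : R) : -1 < u -> u < v ->
  (u ^+ (k.*2).+2 - 1) * (v + 1) < (v ^+ (k.*2).+2 - 1) * (u + 1).
Proof.
move=> hu huv.
set D := (k.*2).+2%:R * u ^+ (k.*2).+1.
have T1 := @tangent_even k (-1) u; have T2 := @tangent_even k v u.
have ev : (-1) ^+ (k.*2).+2 = 1 :> R by rewrite -signr_odd /= odd_double.
rewrite ev in T1.
have := T1 (negbT (lt_eqF hu)) => {}T1.
have := T2 (negbT (gt_eqF huv)) => {}T2.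
rewrite -/D in T1 T2.
set U := u ^+ (k.*2).+2 in T1 T2 *; set V := v ^+ (k.*2).+2 in T2 *.
have P1 : (U - 1) * (v - u) < D * (u + 1) * (v - u).
  rewrite ltr_pM2r; [lra | lra].
have P2 : (u + 1) * (U + D * (v - u)) < (u + 1) * V.
  rewrite ltr_pM2l; [lra | lra].
lra.
Qed.

End S2.

Section S3.
Variable R : realFieldType.

Lemma g_odd_mono n k (x y : R) : 0 < x -> x < y ->
  g n (k.*2).+3 x * y < g n (k.*2).+3 y * x.
Proof.
move=> hx hxy; rewrite /g /=.
have ev : (-1) ^+ (k.*2).+2 = 1 :> R by rewrite -signr_odd /= odd_double.
rewrite ev; set c : R := n.+1%:R.
have cp : 0 < c by rewrite ltr0Sn.
have := @secant_even R k (c * x - 1) (c * y - 1).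
rewrite !subrK; move=> H.
have h1 : -1 < c * x - 1 by rewrite ltrBrDr addrC subrr mulr_gt0.
have h2 : c * x - 1 < c * y - 1 by rewrite ltrD2r ltr_pM2l.
have := H h1 h2; set U := (c * x - 1) ^+ _; set V := (c * y - 1) ^+ _ => H'.
rewrite -(ltr_pM2l cp).
have -> : c * ((U - 1) * y) = (U - 1) * (c * y) by ring.
have -> : c * ((V - 1) * x) = (V - 1) * (c * x) by ring.
exact: H'.
Qed.

Lemma g_odd_inj n d (x y : R) : odd d -> (2 <= d)%N -> 0 < x -> 0 < y ->
  g n d x * y = g n d y * x -> x = y.
Proof.
move=> hodd hd hx hy E.
have [k dk] : exists k, d = (k.*2).+3.
  move: (odd_double_half d); rewrite hodd; case Hh: d./2 => [|j] E'.
    by move: hd; rewrite -E'.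
  by exists j; rewrite -E' doubleS.
subst d; case: (ltgtP x y) => // hxy.
  by have := g_odd_mono n k hx hxy; rewrite E ltxx.
by have := g_odd_mono n k hy hxy; rewrite E ltxx.
Qed.



Lemma sum_if1 m (K : {set 'I_m}) (v : R) :
  \sum_i (if i \in K then v else 0) = #|K|%:R * v.
Proof. by rewrite -big_mkcond sumr_const mulr_natl. Qed.

Lemma sum_if2 m (K1 K2 : {set 'I_m}) (a b : R) : [disjoint K1 & K2] ->
  \sum_i (if i \in K1 then a else if i \in K2 then b else 0)
  = #|K1|%:R * a + #|K2|%:R * b.
Proof.
move=> dis; rewrite -sum_if1 -sum_if1 -big_split; apply: eq_bigr => i _ /=.
case: (boolP (i \in K1)) => h1.
  by rewrite (disjointFr dis h1) addr0.
by rewrite add0r.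
Qed.

Lemma sext_ge0 m (s : 'rV[R]_m) : inDelta (n:=m.+1) s -> forall i, 0 <= sext (n:=m.+1) s i.
Proof.
move=> [h1 h2] i; case: (ltnP i m) => hi.
  by rewrite (@sext_lt R m s _ (Ordinal hi)).
have him : val i = m by apply/eqP; rewrite eqn_leq hi -ltnS ltn_ord.
by rewrite (@sext_max R m s _ him) subr_ge0.
Qed.

Lemma lam_if m d (s : 'rV[R]_m) (K : {set 'I_m.+1}) v : v != 0 ->
  (forall k, sext (n:=m.+1) s k = if k \in K then v else 0) ->
  exists l, forall i, g m.+1 d (sext (n:=m.+1) s i) = l * sext (n:=m.+1) s i.
Proof.
move=> hv hX; exists (g m.+1 d v / v) => i; rewrite hX.
by case: ifP => _; [rewrite divfK | rewrite g0 mulr0].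
Qed.

Lemma card_inv_neq0 m (K : {set 'I_m}) : K != set0 -> (#|K|%:R : R)^-1 != 0.
Proof. by move=> hK; rewrite invr_eq0 pnatr_eq0 -lt0n card_gt0. Qed.

Lemma solve_v m (K : {set 'I_m}) (v : R) : K != set0 ->
  #|K|%:R * v = 1 -> v = (#|K|%:R)^-1.
Proof.
move=> hK E; have hk : (#|K|%:R : R) != 0 by rewrite pnatr_eq0 -lt0n card_gt0.
by rewrite -(mulKf hk v) E mulr1.
Qed.

Lemma exists_pos m (s : 'rV[R]_m) : inDelta (n:=m.+1) s ->
  exists i, 0 < sext (n:=m.+1) s i.
Proof.
move=> hD; case: (pickP (fun i => 0 < sext (n:=m.+1) s i)) => [i hi|H].
  by exists i.
have := sum_sext s; rewrite big1 => [/eqP|i _]; first by rewrite eq_sym oner_eq0.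
have := sext_ge0 hD i; rewrite le_eqVlt H orbF => /eqP <-. done.
Qed.

End S3.

Theorem mainTheorem5 (R : realFieldType) (n d : nat) :
  (2 <= n)%N -> (2 <= d)%N ->
  (* (i) *)
  (forall s : 'rV[R]_(n.-1), inDelta s ->
     (exists K : {set 'I_n}, K != set0 /\
        forall k, sext s k = if k \in K then (#|K|%:R)^-1 else 0) ->
     h n d s = 0)
  /\
  (* (ii) *)
  (d = 2%N -> forall s : 'rV[R]_(n.-1), h n d s = 0)
  /\
  (* (iii) *)
  (odd d -> forall s : 'rV[R]_(n.-1), inDelta s -> h n d s = 0 ->
     exists K : {set 'I_n}, K != set0 /\
        forall k, sext s k = if k \in K then (#|K|%:R)^-1 else 0)
  /\
  (* (iv) *)
  (~~ odd d -> (4 <= d)%N -> forall sstar : R, is_sstar n d sstar ->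
   forall s : 'rV[R]_(n.-1), inDelta s ->
     (h n d s = 0 <->
      exists K1 K2 : {set 'I_n},
        [disjoint K1 & K2] /\ (K1 != set0 \/ K2 != set0) /\
        [\/ (* (a) *)
            [/\ K1 = set0, sstar < (#|K2|%:R)^-1 &
                forall k, sext s k = if k \in K2 then (#|K2|%:R)^-1 else 0],
            (* (b) *)
            [/\ K2 = set0, (#|K1|%:R)^-1 <= sstar &
                forall k, sext s k = if k \in K1 then (#|K1|%:R)^-1 else 0]
          | (* (c) *)
            [/\ K1 != set0, K2 != set0 &
                exists a b : R,
                  0 < a /\ a < sstar /\
                  g n d a / a
                    - #|K2|%:R * g n d ((1 - #|K1|%:R * a) / #|K2|%:R)
                      / (1 - #|K1|%:R * a) = 0 /\
                  b = (1 - #|K1|%:R * a) / #|K2|%:R /\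
                  sstar < b /\ b <= 1 /\
                  (forall k, sext s k =
                        if k \in K1 then a else if k \in K2 then b else 0)]])).

Proof.
move=> hn hd; case: n hn => [//|m] hn.
have hnn := @sext_ge0 R m.
split.
  move=> s _ [K [hK hX]]; apply/h_zero_iff.
  exact: (lam_if d (@card_inv_neq0 R _ K hK) hX).
split.
  move=> -> s; apply/h_zero_iff; exists m.+2%:R => i; by rewrite g2.
split.
  move=> hodd s hD /h_zero_iff [l Hl].
  have [i0 hi0] := exists_pos hD.
  set K := [set i | 0 < sext s i].
  have hK : K != set0 by apply/set0Pn; exists i0; rewrite inE.
  have hX : forall k, sext s k = if k \in K then sext s i0 else 0.
    move=> k; rewrite inE; case: ifP => hk.
      apply: (g_odd_inj (n:=m.+1) hodd hd hk hi0).
      by rewrite !Hl mulrAC.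
    by have := hnn s hD k; rewrite le_eqVlt hk orbF => /eqP <-.
  have := sum_sext s; rewrite (eq_bigr _ (fun k _ => hX k)) sum_if1 => E.
  exists K; split => // k; by rewrite hX -(solve_v hK E).
move=> heven hd4 t [ht1 ht2 hdec hinc] s hD.
have tp : 0 < t by apply: lt_le_trans ht1; rewrite invr_gt0 ltr0Sn.
split.
  move=> /h_zero_iff [l Hl].
  have hP : forall i, 0 < sext s i -> (ppoly R m.+1 d).[sext s i] = l.
    move=> i hi; apply: (mulIf (lt0r_neq0 hi)); by rewrite ppoly_horner Hl.
  set K1 := [set i | (0 < sext s i) && (sext s i <= t)].
  set K2 := [set i | t < sext s i].
  have dis : [disjoint K1 & K2].
    apply/pred0P => i /=; rewrite !inE; apply/negbTE/negP => /andP[/andP[_ h1] h2].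
    by rewrite ltNge h1 in h2.
  have u1 : forall i j, i \in K1 -> j \in K1 -> sext s i = sext s j.
    move=> i j; rewrite !inE => /andP[hi1 hi2] /andP[hj1 hj2].
    case: (ltgtP (sext s i) (sext s j)) => // hij.
      by have := hdec _ _ (ltW hi1) hij hj2; rewrite !hP // ltxx.
    by have := hdec _ _ (ltW hj1) hij hi2; rewrite !hP // ltxx.
  have u2 : forall i j, i \in K2 -> j \in K2 -> sext s i = sext s j.
    move=> i j; rewrite !inE => hi hj.
    case: (ltgtP (sext s i) (sext s j)) => // hij.
      by have := hinc _ _ (ltW hi) hij; rewrite !hP ?ltxx // (lt_trans tp).
    by have := hinc _ _ (ltW hj) hij; rewrite !hP ?ltxx // (lt_trans tp).
  have z : forall i, i \notin K1 -> i \notin K2 -> sext s i = 0.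
    move=> i; rewrite !inE => h1 h2.
    have := hnn s hD i; rewrite le_eqVlt => /orP[/eqP<-//|hp].
    by move: h1 h2; rewrite hp /= -ltNge => ->.
  have hform : forall a b, (forall i, i \in K1 -> sext s i = a) ->
      (forall i, i \in K2 -> sext s i = b) ->
      forall k, sext s k = if k \in K1 then a else if k \in K2 then b else 0.
    move=> a b ha hb k; case: ifP => h1; first exact: ha.
    case: ifP => h2; first exact: hb.
    by rewrite z ?h1 ?h2.
  have hsum := sum_sext s.
  exists K1, K2; split => //.
  have [K1e|K1n] := eqVneq K1 set0; have [K2e|K2n] := eqVneq K2 set0.
  -
    have [i0 hi0] := exists_pos hD.
    have := z i0; rewrite K1e K2e !in_set0 => /(_ isT isT) h.
    by rewrite h ltxx in hi0.
  -
    split; first by right.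
    have [i2 hi2] := set0Pn _ K2n.
    have hX := hform 0 (sext s i2) (fun i hi => ltac:(by move: hi; rewrite K1e in_set0)) (fun i hi => u2 i i2 hi hi2).
    rewrite (eq_bigr _ (fun k _ => hX k)) sum_if2 // mulr0 add0r in hsum.
    have hv := solve_v K2n hsum.
    apply: Or31; split => //.
      by rewrite -hv; move: hi2; rewrite inE.
    by move=> k; rewrite hX K1e in_set0 hv.
  -
    split; first by left.
    have [i1 hi1] := set0Pn _ K1n.
    have hX := hform (sext s i1) 0 (fun i hi => u1 i i1 hi hi1) (fun i hi => ltac:(by move: hi; rewrite K2e in_set0)).
    rewrite (eq_bigr _ (fun k _ => hX k)) sum_if2 // mulr0 addr0 in hsum.
    have hv := solve_v K1n hsum.
    apply: Or32; split => //.
      by rewrite -hv; move: hi1; rewrite inE => /andP[].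
    by move=> k; rewrite hX K2e in_set0 hv; case: ifP.
  -
    split; first by left.
    have [i1 hi1] := set0Pn _ K1n; have [i2 hi2] := set0Pn _ K2n.
    have hX := hform (sext s i1) (sext s i2) (fun i hi => u1 i i1 hi hi1) (fun i hi => u2 i i2 hi hi2).
    rewrite (eq_bigr _ (fun k _ => hX k)) sum_if2 // in hsum.
    apply: Or33; split => //.
    set a := sext s i1 in hsum hi1 *; set b := sext s i2 in hsum hi2 *.
    have k2n : (#|K2|%:R : R) != 0 by rewrite pnatr_eq0 -lt0n card_gt0.
    have ha0 : 0 < a by move: hi1; rewrite inE => /andP[].
    have hat : a <= t by move: hi1; rewrite inE => /andP[].
    have htb : t < b by move: hi2; rewrite inE.
    have hb0 : 0 < b by apply: lt_trans htb.
    have hbdef : b = (1 - #|K1|%:R * a) / #|K2|%:R.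
      by apply: (mulIf k2n); rewrite divfK //; lra.
    have hK2b : 1 - #|K1|%:R * a = #|K2|%:R * b.
      lra.
    exists a, b; split => //; split.
      rewrite lt_neqAle hat andbT; apply/eqP => hat'.
      have := hinc _ _ (lexx t) htb; rewrite -{1}hat' !hP // ?ltxx //.
    split.
      rewrite -hbdef hK2b.
      have := Hl i1; have := Hl i2; rewrite -/a -/b => Hb Ha.
      rewrite Ha Hb; field.
      by rewrite k2n lt0r_neq0 // lt0r_neq0.
    split => //; split => //; split.
      have : #|K2|%:R * b <= 1.
        by rewrite -hK2b lerBlDr lerDl mulr_ge0 // ltW.
      have : 1 <= (#|K2|%:R : R) by rewrite ler1n card_gt0.
      move=> h1 h2; nra.
    exact: hX.
move=> [K1 [K2 [dis [ne hc]]]]; apply/h_zero_iff.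
case: hc => [[K1e ht hX]|[K2e ht hX]|[n1 n2 [a [b [ha [hat [hr [hb [htb [hb1 hX]]]]]]]]]].
- have K2n : K2 != set0 by case: ne => //; rewrite K1e eqxx.
  exact: (lam_if d (@card_inv_neq0 R _ K2 K2n) hX).
- have K1n : K1 != set0 by case: ne => //; rewrite K2e eqxx.
  exact: (lam_if d (@card_inv_neq0 R _ K1 K1n) hX).
- exists (g m.+1 d a / a) => i; rewrite hX.
  case: ifP => _; first by rewrite divfK // lt0r_neq0.
  case: ifP => _; last by rewrite g0 mulr0.
  have k2n : (#|K2|%:R : R) != 0 by rewrite pnatr_eq0 -lt0n card_gt0.
  have hb0 : 0 < b by apply: lt_trans htb.
  have hK2b : 1 - #|K1|%:R * a = #|K2|%:R * b.
    by rewrite hb mulrCA divff // mulr1.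
  rewrite -hb hK2b in hr.
  have E : g m.+1 d a / a = g m.+1 d b / b.
    apply/eqP; rewrite -subr_eq0; rewrite -hr; apply/eqP; field.
    by rewrite (lt0r_neq0 hb0) k2n (lt0r_neq0 ha).
  by rewrite E divfK // lt0r_neq0.
Qed.
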